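(* Let $d,r,k$ be positive integers and $\nu>0$. Let $M_\sharp=X_\sharp X_\sharp^\top$ with $X_\sharp\in\mathbb{R}^{d\times r}$ of rank $r$, $\|X_\sharp\|_{\mathrm{op}}\le1$ and $\|X_\sharp\|_{2,\infty}\le\sqrt{\nu r/d}$; let $S_\sharp\in\mathbb{R}^{d\times d}$ be symmetric with at most $k$ nonzero entries per column; and let $W=M_\sharp+S_\sharp$. Let $\mathcal{X}=\{X\in\mathbb{R}^{d\times r}:\|X\|_{2,\infty}\le\sqrt{\nu r/d}\}$ and $\mathcal{S}=\{S\in\mathbb{R}^{d\times d}\text{ symmetric}:\|Se_i\|_1\le\|S_\sharp e_i\|_1\ \forall i\}$. Define $F((X,S))=\|XX^\top+S-W\|_F$ and $F_Y((X,S))=\|YY^\top+Y(X-Y)^\top+(X-Y)Y^\top+S-W\|_F$. Then for all $X,Y\in\mathcal{X}$, $S\in\mathcal{S}$: $$F((X,S))^2\ge\Big(\tfrac12\sigma_r^2(X_\sharp)-10\sqrt{\tfrac{\nu rk}{d}}\Big)\Big(\mathrm{dist}(X,\mathcal{D}^*(M_\sharp))^2+\|S-S_\sharp\|_F^2\Big),$$ $$|F((X,S))-F_Y((X,S))|\le\|X-Y\|_F^2,$$ and for all $X_1,X_2\in\mathcal{X}$, $S_1,S_2\in\mathcal{S}$, $$|F((X_1,S_1))-F((X_2,S_2))|\le2\sqrt{\nu r}\|X_1-X_2\|_F+\|S_1-S_2\|_F.$$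
   Context: $\|X\|_{2,\infty}$ is the maximum Euclidean row norm; $\|\cdot\|_{\mathrm{op}}$ the spectral norm; $\sigma_r$ the $r$-th largest singular value; $e_i$ the $i$-th standard basis vector. $\mathcal{D}^*(M_\sharp)=\{X_\sharp R:R\in O(r)\}$ and $\mathrm{dist}$ is Frobenius distance. *)

(* Defs.v *)
From HB Require Import structures.
From mathcomp Require Import all_boot all_order all_algebra.
Set Implicit Arguments. Unset Strict Implicit. Unset Printing Implicit Defensive.
Import Order.TTheory GRing.Theory Num.Theory.
Local Open Scope ring_scope.

Definition frob (R : rcfType) m n (A : 'M[R]_(m, n)) : R :=
  Num.sqrt (\sum_(i < m) \sum_(j < n) A i j ^+ 2).

Definition rownorm (R : rcfType) m n (A : 'M[R]_(m, n)) (i : 'I_m) : R :=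
  Num.sqrt (\sum_(j < n) A i j ^+ 2).

Definition norm2inf (R : rcfType) m n (A : 'M[R]_(m, n)) : R :=
  \big[Num.max/0]_(i < m) rownorm A i.

Definition vnorm (R : rcfType) n (v : 'cV[R]_n) : R :=
  Num.sqrt (\sum_(i < n) v i 0 ^+ 2).

Definition opnorm_le (R : rcfType) m n (A : 'M[R]_(m, n)) (c : R) : Prop :=
  forall v : 'cV[R]_n, vnorm (A *m v) <= c * vnorm v.

Definition col_l1 (R : rcfType) m n (A : 'M[R]_(m, n)) (j : 'I_n) : R :=
  \sum_(i < m) `|A i j|.

Definition orthogonal_mx (R : rcfType) r (Q : 'M[R]_r) : Prop :=
  Q^T *m Q = 1%:M.

Definition is_singular_values (R : rcfType) d r (X : 'M[R]_(d, r))
    (sig : 'I_r -> R) : Prop :=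
  exists (U : 'M[R]_(d, r)) (V : 'M[R]_r),
    [/\ U^T *m U = 1%:M, V^T *m V = 1%:M,
        X = U *m diag_mx (\row_j sig j) *m V^T,
        (forall j, 0 <= sig j) &
        (forall i j : 'I_r, (i <= j)%N -> sig j <= sig i)].

Definition sigma_last (R : rcfType) d r (X : 'M[R]_(d, r)) (s : R) : Prop :=
  exists sig, is_singular_values X sig /\
    (forall j : 'I_r, val j = r.-1 -> sig j = s).

(* delta = dist(X, D*(M)) = inf_{Q in O(r)} ||X - Xs Q||_F *)
Definition is_dist_orbit (R : rcfType) d r (Xs X : 'M[R]_(d, r)) (delta : R)
  : Prop :=
  (forall Q : 'M[R]_r, orthogonal_mx Q -> delta <= frob (X - Xs *m Q)) /\
  (forall l : R, (forall Q : 'M[R]_r, orthogonal_mx Q -> l <= frob (X - Xs *m Q))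
                 -> l <= delta).

Definition symmetric_mx (R : rcfType) n (S : 'M[R]_n) : Prop := S^T = S.

(* Main.v *)
Require Import Defs.
From HB Require Import structures.
From mathcomp Require Import all_boot all_order all_algebra.
From mathcomp Require Import ring lra.
From mathcomp Require Import complex.
Import Order.TTheory GRing.Theory Num.Theory.
Set Implicit Arguments. Unset Strict Implicit. Unset Printing Implicit Defensive.
Local Open Scope ring_scope.

Lemma trZ (R : rcfType) m n (a : R) (A : 'M[R]_(m, n)) : (a *: A)^T = a *: A^T.
Proof. by apply/matrixP => i j; rewrite !mxE. Qed.

Lemma cVsq (R : rcfType) n (x : 'cV[R]_n) : (x^T *m x) 0 0 = \sum_i x i 0 ^+ 2.
Proof. by rewrite mxE; apply: eq_bigr => i _; rewrite mxE expr2. Qed.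

Lemma cVsq_ge0 (R : rcfType) n (x : 'cV[R]_n) : 0 <= (x^T *m x) 0 0.
Proof. by rewrite cVsq; apply: sumr_ge0 => i _; apply: sqr_ge0. Qed.

Lemma cVsq_eq0 (R : rcfType) n (x : 'cV[R]_n) : (x^T *m x) 0 0 = 0 -> x = 0.
Proof.
rewrite cVsq => h; apply/matrixP => i j; rewrite ord1 mxE.
have := psumr_eq0P (fun i _ => sqr_ge0 (x i 0)) h (i:=i) isT.
by move/eqP; rewrite sqrf_eq0 => /eqP.
Qed.

Definition nzv (R : rcfType) n (x : 'cV[R]_n) := (Num.sqrt ((x^T *m x) 0 0))^-1 *: x.

Lemma nzv_unit (R : rcfType) n (x : 'cV[R]_n) : x != 0 -> (nzv x)^T *m nzv x = 1%:M.
Proof.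
move=> x0; rewrite /nzv trZ -scalemxAl -scalemxAr scalerA.
have q0 : 0 < (x^T *m x) 0 0.
  rewrite lt_def cVsq_ge0 andbT; apply/eqP => /cVsq_eq0 h; by rewrite h eqxx in x0.
set q := (x^T *m x) 0 0 in q0 *.
rewrite [x^T *m x]mx11_scalar -/q scale_scalar_mx -invfM -expr2 sqr_sqrtr ?ltW //.
by rewrite mulVf ?gt_eqF.
Qed.

Definition e0 (R : rcfType) n : 'cV[R]_n.+1 := delta_mx 0 0.

Definition hh (R : rcfType) n (u : 'cV[R]_n.+1) : 'M[R]_n.+1 :=
  let w := e0 R n - u in
  if w == 0 then 1%:M else 1%:M - (2 / (w^T *m w) 0 0) *: (w *m w^T).

Lemma trB (R : rcfType) m n (A B : 'M[R]_(m, n)) : (A - B)^T = A^T - B^T.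
Proof. by apply/matrixP => i j; rewrite !mxE. Qed.
Lemma trD (R : rcfType) m n (A B : 'M[R]_(m, n)) : (A + B)^T = A^T + B^T.
Proof. by apply/matrixP => i j; rewrite !mxE. Qed.

Lemma hh_sym (R : rcfType) n (u : 'cV[R]_n.+1) : (hh u)^T = hh u.
Proof.
rewrite /hh; case: ifP => _; first by rewrite tr_scalar_mx.
apply/matrixP => i j; rewrite !mxE eq_sym; congr (_ - _ * _).
by apply: eq_bigr => k _; rewrite !mxE mulrC.
Qed.

Lemma sqproj (R : rcfType) n (P : 'M[R]_n) a c : P *m P = c *: P ->
  (1%:M - a *: P) *m (1%:M - a *: P) = 1%:M - (2 * a - a ^+ 2 * c) *: P.
Proof.
move=> hP; rewrite mulmxBl mul1mx mulmxBr mulmx1 -scalemxAl -scalemxAr hP.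
rewrite !scalerA; apply/matrixP => i j; rewrite !mxE; ring.
Qed.

Lemma hh_inv (R : rcfType) n (u : 'cV[R]_n.+1) : hh u *m hh u = 1%:M.
Proof.
rewrite /hh; case: ifP => [_|w0]; first by rewrite mulmx1.
set w := e0 R n - u in w0 *.
have c0 : (w^T *m w) 0 0 != 0.
  by apply/negP => /eqP /cVsq_eq0 h; rewrite h eqxx in w0.
rewrite (@sqproj _ _ _ _ ((w^T *m w) 0 0)).
  set c := (w^T *m w) 0 0 in c0 *.
  rewrite (_ : 2 * (2 / c) - (2 / c) ^+ 2 * c = 0) ?scale0r ?subr0 //.
  by field.
rewrite mulmxA -[w *m w^T *m w]mulmxA [w^T *m w]mx11_scalar mul_mx_scalar.
by rewrite -scalemxAl [in RHS]mxE eqxx mulr1n.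
Qed.

Lemma hh_e0 (R : rcfType) n (u : 'cV[R]_n.+1) : (u^T *m u) 0 0 = 1 ->
  hh u *m e0 R n = u.
Proof.
move=> u1; rewrite /hh; case: ifP => [/eqP w0|w0].
  by rewrite mul1mx; apply/eqP; rewrite -subr_eq0 w0.
set w := e0 R n - u in w0 *.
have c0 : (w^T *m w) 0 0 != 0.
  by apply/negP => /eqP /cVsq_eq0 h; rewrite h eqxx in w0.
have we : w^T *m e0 R n = (w 0 0)%:M.
  by rewrite [LHS]mx11_scalar /e0 -colE !mxE.
have ce : (w^T *m w) 0 0 = 2 * w 0 0.
  rewrite /w trB mulmxBr !mulmxBl /e0 trmx_delta -!rowE -colE.
  set U := u^T *m u in u1 *.
  have -> : U = 1%:M by rewrite [U]mx11_scalar u1.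
  rewrite !mxE /=; ring.
rewrite (@mulmxBl R) mul1mx -scalemxAl -mulmxA we mul_mx_scalar scalerA ce.
have wn : w 0 0 != 0 by apply: contraNneq c0; rewrite ce => ->; rewrite mulr0.
rewrite (_ : 2 / (2 * w 0 0) * w 0 0 = 1) ?scale1r; last by field; rewrite wn.
by rewrite /w opprB addrC subrK.
Qed.

Lemma sym_eigvec (R : rcfType) n (A : 'M[R]_n.+1) : A^T = A ->
  exists a (v : 'rV[R]_n.+1), v != 0 /\ v *m A = a *: v.
Proof.
move=> sA.
pose f := real_complex R.
pose A' := map_mx f A.
have fR : forall x : R, f x \is Num.real.
  by move=> x; apply/complex_realP; exists x.
have hA : A' \is hermsymmx.
  apply/is_hermitianmxP; rewrite expr0 scale1r.
  apply/matrixP => i j; rewrite !mxE.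
  have := fR (A j i); rewrite CrealE => /eqP ->.
  by rewrite -{1}sA mxE.
have /hermitian_normalmx/orthomx_spectralP eqA := hA.
set P := spectralmx A' in eqA; set D := spectral_diag A' in eqA.
have PU : P \in unitmx by apply: spectral_unit.
have hD : D \is a realmx by apply: hermitian_spectral_diag_real.
have eqPA : P *m A' = diag_mx D *m P by rewrite eqA !mulmxA mulmxV // mul1mx.
have /complex_realP [a ha] : D 0 0 \is Num.real by apply: (mxOverP hD).
have w0 : row 0 P != 0.
  apply/negP => /eqP h0.
  have := unitarymxP (spectral_unitarymx A').
  move=> /(congr1 (fun M => row 0 M)); rewrite row_mul -/P h0 mul0mx.
  move=> /rowP /(_ 0); rewrite !mxE eqxx /=.
  by move/eqP; rewrite eq_sym oner_eq0.
have hw : row 0 P *m (A' - (f a)%:M) = 0.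
  rewrite mulmxBr -row_mul eqPA mul_diag_mx mul_mx_scalar.
  by apply/rowP => j; rewrite !mxE ha subrr.
have hdet : \det (A' - (f a)%:M) == 0 by apply/det0P; exists (row 0 P).
have : \det (A - a%:M) == 0.
  move: hdet; rewrite /A' -map_scalar_mx -map_mxB det_map_mx.
  by rewrite fmorph_eq0.
move=> /det0P [v v0 hv]; exists a, v; split => //.
by apply/eqP; rewrite -subr_eq0 -mul_mx_scalar -mulmxBr hv.
Qed.

Lemma nzv_scale (R : rcfType) n (x : 'cV[R]_n) : exists c, nzv x = c *: x.
Proof. by exists (Num.sqrt ((x^T *m x) 0 0))^-1. Qed.

Lemma svec (R : rcfType) n (M : 'M[R]_n.+1) : exists (u v : 'cV[R]_n.+1) (s : R),
  [/\ (u^T *m u) 0 0 = 1, (v^T *m v) 0 0 = 1, 0 <= s, M *m v = s *: u &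
      u^T *m M = s *: v^T].
Proof.
have sA : (M^T *m M)^T = M^T *m M by rewrite trmx_mul trmxK.
have [a [v0 [v00 hv0]]] := sym_eigvec sA.
have vc0 : v0^T != 0.
  by apply: contraNneq v00 => h; rewrite -[v0]trmxK h trmx0.
have hvc : M^T *m M *m v0^T = a *: v0^T.
  by rewrite -{1}sA -trmx_mul hv0 trZ.
set v := nzv v0^T.
have v1 : v^T *m v = 1%:M by apply: nzv_unit.
have hv : M^T *m M *m v = a *: v.
  by rewrite /v /nzv -scalemxAr hvc scalerA mulrC -scalerA.
have v1' : (v^T *m v) 0 0 = 1 by rewrite v1 mxE.
case: (boolP (M *m v == 0)) => [/eqP Mv0|Mv0].
  have : \det M^T == 0.
    apply/det0P; exists v^T; last by rewrite -trmx_mul Mv0 trmx0.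
    apply/eqP => h; move: v1'; rewrite h mul0mx mxE => /eqP.
    by rewrite eq_sym oner_eq0.
  rewrite det_tr => /det0P [w w0 hw].
  have wT0 : w^T != 0 by apply: contraNneq w0 => h; rewrite -[w]trmxK h trmx0.
  exists (nzv w^T), v, 0; split => //.
  - by rewrite nzv_unit // mxE.
  - by rewrite Mv0 scale0r.
  - by rewrite /nzv trZ trmxK -scalemxAl hw !scaler0 scale0r.
set q := ((M *m v)^T *m (M *m v)) 0 0.
have q0 : 0 < q.
  rewrite lt_def cVsq_ge0 andbT; apply/eqP => /cVsq_eq0 h; by rewrite h eqxx in Mv0.
set s := Num.sqrt q.
have s0 : 0 < s by rewrite sqrtr_gt0.
have qa : q = a.
  by rewrite /q trmx_mul -mulmxA (mulmxA M^T) hv -scalemxAr mxE v1' mulr1.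
exists (nzv (M *m v)), v, s; split.
- by rewrite nzv_unit // mxE.
- by [].
- exact: ltW.
- by rewrite /nzv -/q -/s scalerA divff ?gt_eqF // scale1r.
- have e : (M^T *m M *m v)^T = v^T *m M^T *m M by rewrite !trmx_mul trmxK mulmxA.
  rewrite hv trZ in e.
  rewrite /nzv -/q -/s trZ trmx_mul -scalemxAl -e scalerA -qa.
  congr (_ *: _); rewrite -[q](sqr_sqrtr (ltW q0)) -/s.
  by field; rewrite gt_eqF.
Qed.

Definition psd (R : rcfType) n (P : 'M[R]_n) := forall x : 'cV[R]_n, 0 <= (x^T *m P *m x) 0 0.

Lemma hh_u (R : rcfType) n (u : 'cV[R]_n.+1) : (u^T *m u) 0 0 = 1 ->
  hh u *m u = e0 R n.
Proof. by move=> u1; rewrite -[RHS]mul1mx -(hh_inv u) -mulmxA hh_e0. Qed.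

Lemma polar (R : rcfType) n (M : 'M[R]_n) : exists Q : 'M[R]_n,
  [/\ Q^T *m Q = 1%:M, (Q^T *m M)^T = Q^T *m M & psd (Q^T *m M)].
Proof.
elim: n M => [|n IH] M.
  exists 1%:M; split; first by rewrite tr_scalar_mx mul1mx.
    by rewrite [LHS]thinmx0 [RHS]thinmx0.
  by move=> x; rewrite [x]flatmx0 trmx0 !mul0mx mxE.
have [u [v [s [u1 v1 s0 hMv huM]]]] := svec M.
set Hu := hh u; set Hv := hh v.
have Hus : Hu^T = Hu by apply: hh_sym.
have Hvs : Hv^T = Hv by apply: hh_sym.
have Hui : Hu *m Hu = 1%:M by apply: hh_inv.
have Hvi : Hv *m Hv = 1%:M by apply: hh_inv.
set M' := Hu *m M *m Hv.
have hc : M' *m e0 R n = s *: e0 R n.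
  by rewrite /M' -mulmxA hh_e0 // -mulmxA hMv -scalemxAr hh_u.
have hr : (e0 R n)^T *m M' = s *: (e0 R n)^T.
  rewrite /M' -[in LHS](hh_u u1) -/Hu trmx_mul Hus !mulmxA -(mulmxA u^T Hu Hu) Hui mulmx1.
  by rewrite huM -scalemxAl -Hvs -trmx_mul hh_u // trZ.
have hr' : forall k, M' 0 k = s * (k == 0)%:R.
  move=> k; have /matrixP/(_ 0 k) := hr.
  by rewrite /e0 trmx_delta -rowE !mxE.
have hc' : forall k, M' k 0 = s * (k == 0)%:R.
  move=> k; have /matrixP/(_ k 0) := hc.
  by rewrite /e0 -colE !mxE andbT.
have eMd : M' = Hu *m M *m Hv by [].
clearbody M'.
have l0 : lshift n (0 : 'I_1) = 0 :> 'I_n.+1 by apply: val_inj.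
have r0 : forall j : 'I_n, (rshift 1 j == 0 :> 'I_n.+1) = false by [].
have eM' : M' = block_mx (s%:M : 'M_1) 0 0 (drsubmx (M' : 'M_(1 + n))).
  have e1 : ulsubmx (M' : 'M_(1 + n)) = s%:M.
    by apply/matrixP => i j; rewrite !ord1 !mxE l0 hr' mulr1.
  have e2 : ursubmx (M' : 'M_(1 + n)) = 0.
    by apply/matrixP => i j; rewrite !ord1 !mxE l0 hr' r0 mulr0.
  have e3 : dlsubmx (M' : 'M_(1 + n)) = 0.
    by apply/matrixP => i j; rewrite !ord1 !mxE l0 hc' r0 mulr0.
  by rewrite -e1 -e2 -e3 submxK.
have [Q2 [Q2o Q2s Q2p]] := IH (drsubmx (M' : 'M_(1 + n))).
set P2 := Q2^T *m drsubmx (M' : 'M_(1 + n)) in Q2s Q2p.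
pose Q' : 'M[R]_(1 + n) := block_mx 1%:M 0 0 Q2.
pose P' : 'M[R]_(1 + n) := block_mx s%:M 0 0 P2.
have Q'o : Q'^T *m Q' = 1%:M.
  rewrite /Q' tr_block_mx !trmx0 tr_scalar_mx (@mulmx_block R) Q2o.
  by rewrite !mulmx0 !mul0mx !addr0 !add0r mulmx1 -scalar_mx_block.
have Q'M : Q'^T *m M' = P'.
  rewrite /Q' eM' tr_block_mx !trmx0 tr_scalar_mx (@mulmx_block R 1 n 1 n 1 n).
  by rewrite !mulmx0 !mul0mx !addr0 !add0r !mul1mx.
have P's : P'^T = P' by rewrite /P' tr_block_mx !trmx0 tr_scalar_mx Q2s.
have HuM : Hu *m M = M' *m Hv by rewrite eMd -mulmxA Hvi mulmx1.
have eQ : (Hu *m Q' *m Hv)^T *m M = Hv *m P' *m Hv.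
  rewrite !trmx_mul Hus Hvs -!mulmxA HuM !mulmxA -(mulmxA Hv Q'^T M') Q'M.
  by [].
exists (Hu *m Q' *m Hv); split.
- rewrite !trmx_mul Hus Hvs !mulmxA -(mulmxA (Hv *m Q'^T) Hu Hu) Hui mulmx1.
  by rewrite -(mulmxA Hv Q'^T Q') Q'o mulmx1 Hvi.
- by rewrite eQ !trmx_mul Hvs P's mulmxA.
move=> x; rewrite eQ.
have -> : x^T *m (Hv *m P' *m Hv) *m x = (Hv *m x)^T *m P' *m (Hv *m x).
  by rewrite trmx_mul Hvs !mulmxA.
move: (Hv *m x) => y.
rewrite -[y](@vsubmxK _ 1 n) (@tr_col_mx _ 1 n 1) /P' (@mul_row_block R 1 1 n 1 n) (@mul_row_col R 1 1 n 1).
rewrite !mulmx0 !addr0 !add0r mxE.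
apply: addr_ge0; last exact: Q2p.
by rewrite mul_mx_scalar -scalemxAl mxE mulr_ge0 // cVsq_ge0.
Qed.

Lemma CS (R : rcfType) (I : finType) (P : pred I) (f g : I -> R) :
  (\sum_(i | P i) f i * g i) ^+ 2 <=
  (\sum_(i | P i) f i ^+ 2) * (\sum_(i | P i) g i ^+ 2).
Proof.
set a := \sum_(i | P i) f i ^+ 2; set b := \sum_(i | P i) g i ^+ 2.
set c := \sum_(i | P i) f i * g i.
have b0 : 0 <= b by apply: sumr_ge0 => i _; apply: sqr_ge0.
have a0 : 0 <= a by apply: sumr_ge0 => i _; apply: sqr_ge0.
case: (eqVneq b 0) => [bz|bnz].
  have g0 : forall i, P i -> g i = 0.
    move=> i Pi; apply/eqP; rewrite -sqrf_eq0; apply/eqP.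
    exact: (psumr_eq0P (fun i _ => sqr_ge0 (g i)) bz Pi).
  rewrite /c big1 ?expr0n ?bz ?mulr0 // => i Pi; by rewrite g0 // mulr0.
have bp : 0 < b by rewrite lt_def bnz b0.
have h : 0 <= \sum_(i | P i) (b * f i - c * g i) ^+ 2.
  by apply: sumr_ge0 => i _; apply: sqr_ge0.
have e : \sum_(i | P i) (b * f i - c * g i) ^+ 2 = b * (a * b - c ^+ 2).
  rewrite (eq_bigr (fun i => b ^+ 2 * f i ^+ 2 - (2 * b * c) * (f i * g i) + c ^+ 2 * g i ^+ 2)); last by move=> i _; ring.
  rewrite big_split sumrB /= -!mulr_sumr -/a -/b -/c; ring.
rewrite e in h; rewrite -subr_ge0.
by rewrite pmulr_rge0 in h.
Qed.

Definition sqf (R : rcfType) m n (A : 'M[R]_(m, n)) := \sum_(i < m) \sum_(j < n) A i j ^+ 2.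
Definition fdot (R : rcfType) m n (A B : 'M[R]_(m, n)) := \sum_(i < m) \sum_(j < n) A i j * B i j.

Lemma sqf_ge0 (R : rcfType) m n (A : 'M[R]_(m, n)) : 0 <= sqf A.
Proof. by apply: sumr_ge0 => i _; apply: sumr_ge0 => j _; apply: sqr_ge0. Qed.

Lemma frob_sqf (R : rcfType) m n (A : 'M[R]_(m, n)) : frob A = Num.sqrt (sqf A).
Proof. by []. Qed.

Lemma frob_ge0 (R : rcfType) m n (A : 'M[R]_(m, n)) : 0 <= frob A.
Proof. exact: sqrtr_ge0. Qed.

Lemma frob2 (R : rcfType) m n (A : 'M[R]_(m, n)) : frob A ^+ 2 = sqf A.
Proof. by rewrite sqr_sqrtr // sqf_ge0. Qed.

Lemma sqf_fdot (R : rcfType) m n (A : 'M[R]_(m, n)) : sqf A = fdot A A.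
Proof. by apply: eq_bigr => i _; apply: eq_bigr => j _; rewrite expr2. Qed.

Lemma pairE (R : rcfType) m n (F : 'I_m -> 'I_n -> R) :
  \sum_(i < m) \sum_(j < n) F i j = \sum_(p : 'I_m * 'I_n) F p.1 p.2.
Proof. by rewrite pair_big. Qed.

Lemma fdot_CS (R : rcfType) m n (A B : 'M[R]_(m, n)) : fdot A B ^+ 2 <= sqf A * sqf B.
Proof. by rewrite /fdot /sqf !pairE; apply: (CS xpredT (fun p => A p.1 p.2)). Qed.

Lemma sqrt_le (R : rcfType) (x y : R) : 0 <= y -> x ^+ 2 <= y -> `|x| <= Num.sqrt y.
Proof. by move=> y0 h; rewrite -sqrtr_sqr ler_sqrt. Qed.

Lemma fdot_le (R : rcfType) m n (A B : 'M[R]_(m, n)) : `|fdot A B| <= frob A * frob B.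
Proof.
rewrite /frob -sqrtrM ?sqf_ge0 //; apply: sqrt_le; last exact: fdot_CS.
by apply: mulr_ge0; apply: sqf_ge0.
Qed.

Lemma sqfD (R : rcfType) m n (A B : 'M[R]_(m, n)) :
  sqf (A + B) = sqf A + 2 * fdot A B + sqf B.
Proof.
rewrite /sqf /fdot mulr_sumr -!big_split /=; apply: eq_bigr => i _.
rewrite mulr_sumr -!big_split /=; apply: eq_bigr => j _; rewrite mxE; ring.
Qed.

Lemma frobD (R : rcfType) m n (A B : 'M[R]_(m, n)) : frob (A + B) <= frob A + frob B.
Proof.
rewrite -[X in _ <= X]ger0_norm ?addr_ge0 ?frob_ge0 //.
rewrite -sqrtr_sqr [frob (A + B)]frob_sqf ler_sqrt ?sqr_ge0 // sqfD sqrrD !frob2.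
have := fdot_le A B; rewrite ler_norml => /andP [_ h].
rewrite lerD2r lerD2l.
by rewrite mulr2n; lra.
Qed.

Lemma sqfN (R : rcfType) m n (A : 'M[R]_(m, n)) : sqf (- A) = sqf A.
Proof. by apply: eq_bigr => i _; apply: eq_bigr => j _; rewrite mxE sqrrN. Qed.

Lemma frobN (R : rcfType) m n (A : 'M[R]_(m, n)) : frob (- A) = frob A.
Proof. by rewrite !frob_sqf sqfN. Qed.

Lemma frob_abs (R : rcfType) m n (A B : 'M[R]_(m, n)) :
  `|frob A - frob B| <= frob (A - B).
Proof.
have h1 := frobD (A - B) B; rewrite subrK in h1.
have h2 := frobD (B - A) A; rewrite subrK -opprB frobN in h2.
rewrite ler_norml; apply/andP; split; lra.
Qed.

Lemma sqf_tr (R : rcfType) m n (A : 'M[R]_(m, n)) : sqf A^T = sqf A.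
Proof.
rewrite /sqf exchange_big; apply: eq_bigr => i _; apply: eq_bigr => j _.
by rewrite mxE.
Qed.

Lemma frob_tr (R : rcfType) m n (A : 'M[R]_(m, n)) : frob A^T = frob A.
Proof. by rewrite !frob_sqf sqf_tr. Qed.

Lemma sqf_mul (R : rcfType) m n p (A : 'M[R]_(m, n)) (B : 'M[R]_(n, p)) :
  sqf (A *m B) <= sqf A * sqf B.
Proof.
rewrite /sqf mulr_suml; apply: ler_sum => i _.
rewrite [X in _ <= _ * X]exchange_big mulr_sumr; apply: ler_sum => j _.
by rewrite mxE; apply: CS.
Qed.

Lemma frob_mul (R : rcfType) m n p (A : 'M[R]_(m, n)) (B : 'M[R]_(n, p)) :
  frob (A *m B) <= frob A * frob B.
Proof.
rewrite !frob_sqf -sqrtrM ?sqf_ge0 // ler_sqrt ?sqf_mul //.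
by apply: mulr_ge0; apply: sqf_ge0.
Qed.

Lemma fdot_tr (R : rcfType) m n (A B : 'M[R]_(m, n)) : fdot A B = \tr (A *m B^T).
Proof.
rewrite /fdot /mxtrace; apply: eq_bigr => i _; rewrite mxE.
by apply: eq_bigr => j _; rewrite mxE.
Qed.

Lemma sqf_trace (R : rcfType) m n (A : 'M[R]_(m, n)) : sqf A = \tr (A *m A^T).
Proof. by rewrite sqf_fdot fdot_tr. Qed.

Lemma sqf_rows (R : rcfType) m n (A : 'M[R]_(m, n)) :
  sqf A = \sum_i rownorm A i ^+ 2.
Proof.
apply: eq_bigr => i _; rewrite /rownorm sqr_sqrtr //.
by apply: sumr_ge0 => j _; apply: sqr_ge0.
Qed.

Lemma sqf_orth (R : rcfType) m n p (A : 'M[R]_(m, n)) (O : 'M[R]_(n, p)) :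
  O *m O^T = 1%:M -> sqf (A *m O) = sqf A.
Proof.
move=> hO; rewrite !sqf_trace trmx_mul mulmxA -(mulmxA A) hO mulmx1 //.
Qed.



Lemma rownorm_le (R : rcfType) m n (X : 'M[R]_(m, n)) c :
  norm2inf X <= c -> forall i, rownorm X i <= c.
Proof.
move=> h i; apply: le_trans h; rewrite /norm2inf.
exact: (le_bigmax (0 : R) (fun i => rownorm X i) i).
Qed.

Lemma rownorm_ge0 (R : rcfType) m n (X : 'M[R]_(m, n)) i : 0 <= rownorm X i.
Proof. exact: sqrtr_ge0. Qed.

Lemma sqf_inX (R : rcfType) d r (X : 'M[R]_(d, r)) (c : R) :
  (0 < d)%N -> 0 <= c -> norm2inf X <= Num.sqrt (c / d%:R) -> sqf X <= c.
Proof.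
move=> d0 c0 h; rewrite sqf_rows.
apply: le_trans (_ : \sum_(i < d) (c / d%:R) <= c).
  apply: ler_sum => i _; rewrite -(@sqr_sqrtr _ (c / d%:R)) ?divr_ge0 ?ler0n //.
  rewrite !expr2; apply: ler_pM; rewrite ?rownorm_ge0 //; exact: rownorm_le.
rewrite sumr_const card_ord.
have dn : d%:R != 0 :> R by rewrite pnatr_eq0 -lt0n.
by rewrite -[X in X <= _]mulr_natr mulfVK.
Qed.

Lemma frob_inX (R : rcfType) d r (X : 'M[R]_(d, r)) (c : R) :
  (0 < d)%N -> 0 <= c -> norm2inf X <= Num.sqrt (c / d%:R) -> frob X <= Num.sqrt c.
Proof. by move=> d0 c0 h; rewrite frob_sqf ler_sqrt // sqf_inX. Qed.

Lemma part3 (R : rcfType) d r (X1 X2 : 'M[R]_(d, r)) (S1 S2 W : 'M[R]_d) K :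
  frob X1 <= K -> frob X2 <= K ->
  `|frob (X1 *m X1^T + S1 - W) - frob (X2 *m X2^T + S2 - W)| <=
   2 * K * frob (X1 - X2) + frob (S1 - S2).
Proof.
move=> h1 h2; apply: le_trans (frob_abs _ _) _.
have -> : X1 *m X1^T + S1 - W - (X2 *m X2^T + S2 - W) =
    X1 *m (X1 - X2)^T + (X1 - X2) *m X2^T + (S1 - S2).
  rewrite trB (@mulmxBr R) (@mulmxBl R).
  by apply/matrixP => i j; rewrite !mxE; ring.
apply: le_trans (frobD _ _) _; rewrite lerD2r.
apply: le_trans (frobD _ _) _.
have f0 := frob_ge0 (X1 - X2).
apply: le_trans (lerD (frob_mul _ _) (frob_mul _ _)) _.
rewrite !frob_tr.
have g1 := frob_ge0 X1; have g2 := frob_ge0 X2.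
nra.
Qed.

Lemma part2 (R : rcfType) d r (X Y : 'M[R]_(d, r)) (S W : 'M[R]_d) :
  `|frob (X *m X^T + S - W) -
    frob (Y *m Y^T + Y *m (X - Y)^T + (X - Y) *m Y^T + S - W)| <= frob (X - Y) ^+ 2.
Proof.
apply: le_trans (frob_abs _ _) _.
have -> : X *m X^T + S - W - (Y *m Y^T + Y *m (X - Y)^T + (X - Y) *m Y^T + S - W)
   = (X - Y) *m (X - Y)^T.
  rewrite !trB !(@mulmxBr R) !(@mulmxBl R).
  by apply/matrixP => i j; rewrite !mxE; ring.
by apply: le_trans (frob_mul _ _) _; rewrite frob_tr expr2.
Qed.

Lemma fdotC (R : rcfType) m n (A B : 'M[R]_(m, n)) : fdot A B = fdot B A.
Proof. by apply: eq_bigr => i _; apply: eq_bigr => j _; rewrite mulrC. Qed.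

Lemma fdotDl (R : rcfType) m n (A B C : 'M[R]_(m, n)) : fdot (A + B) C = fdot A C + fdot B C.
Proof.
rewrite /fdot -big_split; apply: eq_bigr => i _; rewrite -big_split.
by apply: eq_bigr => j _; rewrite mxE mulrDl.
Qed.

Lemma trrot (R : rcfType) m n p q (A : 'M[R]_(m, n)) (B : 'M[R]_(n, p))
  (C : 'M[R]_(p, q)) (E : 'M[R]_(q, m)) :
  \tr (A *m B *m C *m E) = \tr (E *m A *m B *m C).
Proof. by rewrite mxtrace_mulC !mulmxA. Qed.

Lemma tu (R : rcfType) d r (Z D : 'M[R]_(d, r)) (g : R) :
  (Z^T *m D)^T = Z^T *m D ->
  0 <= \tr ((Z^T *m Z + Z^T *m D) *m (D^T *m D)) ->
  g <= \tr (Z^T *m Z *m (D^T *m D)) ->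
  g / 2 <= sqf (Z *m D^T + D *m Z^T + D *m D^T).
Proof.
move=> As hP hg.
set A := Z^T *m D in As hP *; set B := D^T *m D in hP hg *.
set G := Z^T *m Z in hP hg *.
have Bs : B^T = B by rewrite /B trmx_mul trmxK.
rewrite (@mulmxDl R) mxtraceD in hP.
set t := \tr (A *m B) in hP.
set tg := \tr (G *m B) in hP hg.
have e1 : sqf (Z *m D^T) = tg.
  by rewrite /tg /G /B sqf_trace trmx_mul trmxK !mulmxA [LHS]trrot.
have e2 : sqf (D *m Z^T) = tg.
  by rewrite -sqf_tr trmx_mul trmxK e1.
have e3 : sqf (D *m D^T) = sqf B.
  by rewrite !sqf_trace Bs trmx_mul trmxK /B !mulmxA [LHS]trrot.
have e4 : fdot (Z *m D^T) (D *m Z^T) = sqf A.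
  have -> : sqf A = \tr (A^T *m A^T) by rewrite sqf_trace As.
  by rewrite fdot_tr /A !trmx_mul !trmxK !mulmxA [LHS]trrot.
have e5 : fdot (Z *m D^T) (D *m D^T) = t.
  by rewrite fdot_tr /t /A /B trmx_mul trmxK !mulmxA -[LHS]mxtrace_tr !trmx_mul !trmxK !mulmxA [LHS]trrot.
have e6 : fdot (D *m Z^T) (D *m D^T) = t.
  by rewrite fdot_tr /t /A /B trmx_mul trmxK !mulmxA [LHS]trrot [LHS]trrot [LHS]trrot.
rewrite !sqfD !fdotDl e1 e2 e3 e4 e5 e6.
have := fdot_le A B; rewrite ler_norml => /andP [hAB _].
have eAB : fdot A B = t by rewrite fdot_tr Bs.
rewrite eAB in hAB.
have fa := frob_ge0 A; have fb := frob_ge0 B.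
have k : 0 <= 2 * frob A ^+ 2 - 5 / 2 * frob A * frob B + frob B ^+ 2.
  have h1 := sqr_ge0 (frob A - 5 / 8 * frob B); have h2 := sqr_ge0 (frob B).
  have -> : 2 * frob A ^+ 2 - 5 / 2 * frob A * frob B + frob B ^+ 2 =
    2 * (frob A - 5 / 8 * frob B) ^+ 2 + 7 / 32 * frob B ^+ 2 by field.
  lra.
rewrite !frob2 in k.
lra.
Qed.

Lemma rowdot (R : rcfType) m1 m2 n (A : 'M[R]_(m1, n)) (B : 'M[R]_(m2, n)) i j :
  `|\sum_l A i l * B j l| <= rownorm A i * rownorm B j.
Proof.
rewrite /rownorm -sqrtrM; last by apply: sumr_ge0 => l _; apply: sqr_ge0.
apply: sqrt_le; last exact: CS.
by apply: mulr_ge0; apply: sumr_ge0 => l _; apply: sqr_ge0.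
Qed.

Lemma cross (R : rcfType) d r (Xm Z Dl : 'M[R]_(d, r)) (T : 'M[R]_d) (rho kap : R) :
  (forall i, rownorm Xm i <= rho) -> (forall i, rownorm Z i <= rho) ->
  T^T = T -> 0 <= kap -> 0 <= rho ->
  (forall i, col_l1 T i <= kap * Num.sqrt (\sum_j T j i ^+ 2)) ->
  `|fdot (Dl *m Xm^T + Z *m Dl^T) T| <= 2 * rho * kap * frob Dl * frob T.
Proof.
move=> hX hZ Ts k0 rho0 hT.
set E := Dl *m Xm^T + Z *m Dl^T.
set a := fun i => rownorm Dl i.
have a0 : forall i, 0 <= a i by move=> i; apply: rownorm_ge0.
have hE : forall i j, `|E i j| <= rho * (a i + a j).
  move=> i j; rewrite !mxE.
  have e1 : \sum_l Dl i l * Xm^T l j = \sum_l Dl i l * Xm j l.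
    by apply: eq_bigr => l _; rewrite mxE.
  have e2 : \sum_l Z i l * Dl^T l j = \sum_l Z i l * Dl j l.
    by apply: eq_bigr => l _; rewrite mxE.
  rewrite e1 e2; apply: le_trans (ler_normD _ _) _.
  have h1 := rowdot Dl Xm i j; have h2 := rowdot Z Dl i j.
  have := hX j; have := hZ i; have := a0 i; have := a0 j.
  have := rownorm_ge0 Xm j; have := rownorm_ge0 Z i.
  rewrite /a in h1 h2 *; nra.
have Tsym : forall i j, T i j = T j i.
  by move=> i j; rewrite -{1}Ts mxE.
have step1 : `|fdot E T| <= \sum_i \sum_j rho * (a i + a j) * `|T i j|.
  apply: le_trans (ler_norm_sum _ _ _) _; apply: ler_sum => i _.
  apply: le_trans (ler_norm_sum _ _ _) _; apply: ler_sum => j _.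
  by rewrite normrM ler_wpM2r.
have e : \sum_i \sum_j rho * (a i + a j) * `|T i j| =
    rho * (\sum_i a i * col_l1 T i) + rho * (\sum_i a i * col_l1 T i).
  have ei : forall i, \sum_j rho * (a i + a j) * `|T i j| =
      rho * (a i * col_l1 T i) + \sum_j rho * (a j * `|T i j|).
    move=> i; rewrite /col_l1 !mulr_sumr -big_split /=; apply: eq_bigr => j _.
    by rewrite Tsym; ring.
  rewrite (eq_bigr _ (fun i _ => ei i)) big_split /= -mulr_sumr; congr (_ + _).
  rewrite exchange_big /= mulr_sumr; apply: eq_bigr => j _.
  by rewrite /col_l1 !mulr_sumr; apply: eq_bigr => i _.
have step2 : \sum_i a i * col_l1 T i <= kap * (frob Dl * frob T).
  apply: le_trans (_ : \sum_i a i * (kap * Num.sqrt (\sum_j T j i ^+ 2)) <= _).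
    by apply: ler_sum => i _; apply: ler_wpM2l.
  rewrite (eq_bigr (fun i => kap * (a i * Num.sqrt (\sum_j T j i ^+ 2)))); last first.
    by move=> i _; ring.
  rewrite -mulr_sumr ler_wpM2l //.
  apply: le_trans (ler_norm _) _.
  rewrite !frob_sqf -sqrtrM ?sqf_ge0 //; apply: sqrt_le.
    by apply: mulr_ge0; apply: sqf_ge0.
  apply: le_trans (CS xpredT _ _) _.
  have -> : \sum_i a i ^+ 2 = sqf Dl by rewrite sqf_rows.
  have -> : \sum_i Num.sqrt (\sum_j T j i ^+ 2) ^+ 2 = sqf T.
    rewrite /sqf exchange_big; apply: eq_bigr => i _.
    by rewrite sqr_sqrtr //; apply: sumr_ge0 => j _; apply: sqr_ge0.
  by [].
apply: le_trans step1 _; rewrite e.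
have := step2; nra.
Qed.

Lemma cone (R : rcfType) d (S Ss : 'M[R]_d) (k : nat) (i : 'I_d) :
  col_l1 S i <= col_l1 Ss i ->
  leq #|[set j : 'I_d | Ss j i != 0]| k ->
  col_l1 (S - Ss) i <= 2 * Num.sqrt k%:R * Num.sqrt (\sum_j (S - Ss) j i ^+ 2).
Proof.
move=> hS hk.
set Om := [set j : 'I_d | Ss j i != 0].
set T := S - Ss.
have split : forall (F : 'I_d -> R), \sum_j F j =
    \sum_(j | j \in Om) F j + \sum_(j | j \notin Om) F j.
  by move=> F; rewrite (bigID (fun j => j \in Om)).
have off : forall j, j \notin Om -> Ss j i = 0.
  by move=> j; rewrite inE negbK => /eqP.
have h1 : \sum_(j | j \notin Om) `|T j i| <= \sum_(j | j \in Om) `|T j i|.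
  have e1 : \sum_(j | j \notin Om) `|T j i| = \sum_(j | j \notin Om) `|S j i|.
    by apply: eq_bigr => j hj; rewrite !mxE off // subr0.
  have e2 : \sum_(j | j \notin Om) `|Ss j i| = 0.
    by apply: big1 => j hj; rewrite off // normr0.
  move: hS; rewrite /col_l1 (split (fun j => `|S j i|)) (split (fun j => `|Ss j i|)) e2 addr0.
  rewrite e1 -lerBrDl => h; apply: le_trans h _.
  rewrite -sumrB; apply: ler_sum => j _.
  by rewrite !mxE distrC lerB_dist.
have h2 : \sum_(j | j \in Om) `|T j i| <= Num.sqrt k%:R * Num.sqrt (\sum_j T j i ^+ 2).
  rewrite -sqrtrM ?ler0n //.
  apply: le_trans (ler_norm _) _; apply: sqrt_le.
    by apply: mulr_ge0; rewrite ?ler0n //; apply: sumr_ge0 => j _; apply: sqr_ge0.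
  have := CS (fun j => j \in Om) (fun _ => 1) (fun j => `|T j i|).
  rewrite (eq_bigr (fun j => `|T j i|)); last by move=> j _; rewrite mul1r.
  move=> h; apply: le_trans h _.
  apply: ler_pM.
  - by apply: sumr_ge0 => j _; apply: sqr_ge0.
  - by apply: sumr_ge0 => j _; apply: sqr_ge0.
  - by rewrite (eq_bigr (fun _ => 1)) ?sumr_const ?ler_nat // => j _; rewrite expr1n.
  - rewrite (split (fun j => T j i ^+ 2)) -[X in X <= _]addr0 lerD //.
      by apply: ler_sum => j _; rewrite real_normK ?num_real.
    by apply: sumr_ge0 => j _; apply: sqr_ge0.
rewrite /col_l1 split; lra.
Qed.


Lemma psd_tr (R : rcfType) d r (P : 'M[R]_r) (D : 'M[R]_(d, r)) :
  psd P -> 0 <= \tr (P *m (D^T *m D)).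
Proof.
move=> hP; rewrite mxtrace_mulC -mulmxA mxtrace_mulC.
rewrite /mxtrace; apply: sumr_ge0 => i _.
have -> : (D *m P *m D^T) i i = ((row i D)^T^T *m P *m (row i D)^T) 0 0.
  rewrite trmxK !mxE; apply: eq_bigr => k _; rewrite !mxE; congr (_ * _).
  by apply: eq_bigr => l _; rewrite !mxE.
exact: hP.
Qed.

Lemma rownorm_sqf (R : rcfType) m n (A : 'M[R]_(m, n)) i :
  rownorm A i = Num.sqrt (sqf (row i A)).
Proof.
by rewrite /rownorm /sqf big_ord1; congr Num.sqrt; apply: eq_bigr => j _; rewrite mxE.
Qed.

Lemma rownorm_orth (R : rcfType) m n p (A : 'M[R]_(m, n)) (O : 'M[R]_(n, p)) i :
  O *m O^T = 1%:M -> rownorm (A *m O) i = rownorm A i.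
Proof. by move=> hO; rewrite !rownorm_sqf row_mul sqf_orth. Qed.

Lemma gb (R : rcfType) d r (Xs U : 'M[R]_(d, r)) (V Q : 'M[R]_r) (sig : 'I_r -> R)
    (D : 'M[R]_(d, r)) (s : R) :
  U^T *m U = 1%:M -> V^T *m V = 1%:M -> Q^T *m Q = 1%:M ->
  Xs = U *m diag_mx (\row_j sig j) *m V^T -> (forall j, 0 <= s <= sig j) ->
  s ^+ 2 * sqf D <= \tr ((Xs *m Q)^T *m (Xs *m Q) *m (D^T *m D)).
Proof.
move=> hU hV hQ eX hs.
set W := (Xs *m Q)^T.
have -> : (Xs *m Q) = W^T by rewrite trmxK.
have -> : \tr (W *m W^T *m (D^T *m D)) = sqf (D *m W).
  by rewrite sqf_trace trmx_mul !mulmxA [LHS]trrot.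
have eW : D *m W = D *m (Q^T *m V) *m diag_mx (\row_j sig j) *m U^T.
  by rewrite /W eX !trmx_mul trmxK tr_diag_mx !mulmxA.
have hVV : V *m V^T = 1%:M by apply: mulmx1C.
have hO : (Q^T *m V) *m (Q^T *m V)^T = 1%:M.
  by rewrite trmx_mul trmxK -mulmxA (mulmxA V) hVV mul1mx.
rewrite eW sqf_orth; last by rewrite trmxK.
set K := D *m (Q^T *m V).
have -> : sqf D = sqf K by rewrite /K sqf_orth.
rewrite /sqf mulr_sumr; apply: ler_sum => i _; rewrite mulr_sumr; apply: ler_sum => j _.
rewrite mul_mx_diag !mxE exprMn [X in _ <= X]mulrC ler_wpM2r ?sqr_ge0 //.
have /andP [s0 sj] := hs j.
by rewrite lerXn2r // ?nnegrE // (le_trans s0 sj).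
Qed.



Lemma sig_le1 (R : rcfType) d r (Xs U : 'M[R]_(d, r)) (V : 'M[R]_r) (sig : 'I_r -> R)
    (l : 'I_r) :
  U^T *m U = 1%:M -> V^T *m V = 1%:M ->
  Xs = U *m diag_mx (\row_j sig j) *m V^T -> opnorm_le Xs 1 -> sig l ^+ 2 <= 1.
Proof.
move=> hU hV eX hop.
set e : 'cV[R]_r := delta_mx l 0.
have ee : (e^T *m e) 0 0 = 1 by rewrite /e trmx_delta mul_delta_mx mxE !eqxx.
have hv := hop (V *m e).
have vn : forall x : 'cV[R]_r, vnorm x = Num.sqrt ((x^T *m x) 0 0) by move=> x; rewrite cVsq.
have vn' : forall x : 'cV[R]_d, vnorm x = Num.sqrt ((x^T *m x) 0 0) by move=> x; rewrite cVsq.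
have De : diag_mx (\row_j sig j) *m e = sig l *: e.
  apply/matrixP => i j; rewrite mul_diag_mx !mxE.
  by case: (eqVneq i l) => [->|nl]; rewrite ?mulr0 //= (negbTE nl) /= mulr0.
rewrite vn vn' in hv.
have e1 : (V *m e)^T *m (V *m e) = e^T *m e.
  by rewrite trmx_mul -mulmxA (mulmxA V^T) hV mul1mx.
have e2 : (Xs *m (V *m e))^T *m (Xs *m (V *m e)) = sig l ^+ 2 *: (e^T *m e).
  rewrite eX -!mulmxA (mulmxA V^T) hV mul1mx De.
  rewrite trmx_mul -mulmxA (mulmxA U^T) hU mul1mx trZ -scalemxAl -scalemxAr scalerA.
  by rewrite expr2.
rewrite e1 e2 ee mul1r sqrtr1 mxE ee mulr1 -sqrtr1 ler_sqrt // in hv.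
Qed.

Unset Implicit Arguments.

Theorem lemma8p2 (R : rcfType) (d r k : nat) (nu : R)
  (Xs : 'M[R]_(d, r)) (Ss : 'M[R]_d) (sr : R) :
  (0 < d)%N -> (0 < r)%N -> (0 < k)%N -> 0 < nu ->
  \rank Xs = r ->
  opnorm_le Xs 1 ->
  norm2inf Xs <= Num.sqrt (nu * r%:R / d%:R) ->
  symmetric_mx Ss ->
  (forall j : 'I_d, leq #|[set i : 'I_d | Ss i j != 0]| k) ->
  sigma_last Xs sr ->
  let W := Xs *m Xs^T + Ss in
  let inX := fun X : 'M[R]_(d, r) => norm2inf X <= Num.sqrt (nu * r%:R / d%:R) in
  let inS := fun S : 'M[R]_d =>
    symmetric_mx S /\ (forall i : 'I_d, col_l1 S i <= col_l1 Ss i) in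
  let F := fun (X : 'M[R]_(d, r)) (S : 'M[R]_d) => frob (X *m X^T + S - W) in
  let FY := fun (Y X : 'M[R]_(d, r)) (S : 'M[R]_d) =>
    frob (Y *m Y^T + Y *m (X - Y)^T + (X - Y) *m Y^T + S - W) in
  (forall (X Y : 'M[R]_(d, r)) (S : 'M[R]_d), inX X -> inX Y -> inS S ->
     (forall delta, is_dist_orbit Xs X delta ->
        F X S ^+ 2 >= (2^-1 * sr ^+ 2 - 10 * Num.sqrt (nu * r%:R * k%:R / d%:R))
                      * (delta ^+ 2 + frob (S - Ss) ^+ 2))
     /\ `|F X S - FY Y X S| <= frob (X - Y) ^+ 2) /\
  (forall (X1 X2 : 'M[R]_(d, r)) (S1 S2 : 'M[R]_d),
     inX X1 -> inX X2 -> inS S1 -> inS S2 ->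
     `|F X1 S1 - F X2 S2| <= 2 * Num.sqrt (nu * r%:R) * frob (X1 - X2) + frob (S1 - S2)).

Proof.
move=> d0 r0 k0 nu0 rk hop hXs Ss_sym hk hsig W inX inS F FY.
have rhoc0 : 0 <= nu * r%:R / d%:R by apply: divr_ge0; [apply: mulr_ge0; [apply: ltW|] |]; rewrite ?ler0n.
have nr0 : 0 <= nu * r%:R by apply: mulr_ge0; [apply: ltW|]; rewrite ?ler0n.
split; last first.
  move=> X1 X2 S1 S2 h1 h2 _ _.
  rewrite /F /W; apply: part3; exact: frob_inX.
move=> X Y S hX hY hS; split; last by rewrite /F /FY; apply: part2.
move=> delta [hd1 hd2].
have [sig [[U [V [hU hV eX sig0 sigmono]]] hlast]] := hsig.
have lr : (r.-1 < r)%N by rewrite prednK.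
set l := Ordinal lr.
have srl : sig l = sr by apply: hlast.
have hs : forall j, 0 <= sr <= sig j.
  move=> j; rewrite -srl sig0 /=; apply: sigmono.
  by rewrite /= -ltnS prednK.
have sr1 : sr ^+ 2 <= 1 by rewrite -srl; apply: (sig_le1 l hU hV eX hop).
have sr0 : 0 <= sr by have /andP [] := hs l.
set c := Num.sqrt (nu * r%:R * k%:R / d%:R).
have c0 : 0 <= c by apply: sqrtr_ge0.
set coef := 2^-1 * sr ^+ 2 - 10 * c.
have dl0 : 0 <= delta by apply: hd2 => Q _; apply: frob_ge0.
have Fge0 : 0 <= F X S ^+ 2 by apply: sqr_ge0.
case: (lerP coef 0) => hcoef.
  apply: le_trans Fge0; apply: mulr_le0_ge0 => //.
  by apply: addr_ge0; apply: sqr_ge0.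
have [Q [hQ Ps Pp]] := polar (Xs^T *m X).
have hQQ : Q *m Q^T = 1%:M by apply: mulmx1C.
set Z := Xs *m Q.
set Dl := X - Z.
set T := S - Ss.
set E := X *m X^T - Z *m Z^T.
have hdl : delta <= frob Dl by apply: hd1.
have eZZ : Z *m Z^T = Xs *m Xs^T by rewrite /Z trmx_mul mulmxA -(mulmxA Xs) hQQ mulmx1.
have eF : F X S = frob (E + T).
  rewrite /F /W /E /T eZZ; congr frob.
  by apply/matrixP => i j; rewrite !mxE; ring.
have eX1 : X = Z + Dl by rewrite /Dl addrC subrK.
have eE1 : E = Dl *m X^T + Z *m Dl^T.
  rewrite /E /Dl trB (@mulmxBr R) (@mulmxBl R).
  by apply/matrixP => i j; rewrite !mxE; ring.
have eE2 : E = Z *m Dl^T + Dl *m Z^T + Dl *m Dl^T.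
  rewrite /E /Dl !trB !(@mulmxBr R) !(@mulmxBl R).
  by apply/matrixP => i j; rewrite !mxE; ring.
have eP : Q^T *m (Xs^T *m X) = Z^T *m X by rewrite /Z trmx_mul mulmxA.
have ePZ : Z^T *m Z + Z^T *m Dl = Z^T *m X by rewrite -(@mulmxDr R) -eX1.
have As : (Z^T *m Dl)^T = Z^T *m Dl.
  have -> : Z^T *m Dl = Z^T *m X - Z^T *m Z by rewrite -ePZ addrC addKr.
  rewrite trB -eP Ps; congr (_ - _); by rewrite trmx_mul trmxK.
have htu : sr ^+ 2 * sqf Dl / 2 <= sqf E.
  rewrite eE2; apply: tu => //.
    by rewrite ePZ -eP; apply: psd_tr.
  by have := gb Dl hU hV hQ eX hs; rewrite -/Z.
set rho := Num.sqrt (nu * r%:R / d%:R) in hXs hX.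
have rho0 : 0 <= rho by apply: sqrtr_ge0.
have hXr := rownorm_le hX.
have hZr : forall i, rownorm Z i <= rho.
  by move=> i; rewrite /Z rownorm_orth //; apply: rownorm_le.
have Ts : T^T = T.
  by case: hS => hS1 _; rewrite /T trB hS1 Ss_sym.
set kap : R := 2 * Num.sqrt (k%:R : R).
have kap0 : 0 <= kap by apply: mulr_ge0; rewrite ?ler0n ?sqrtr_ge0.
have hT : forall i, col_l1 T i <= kap * Num.sqrt (\sum_j T j i ^+ 2).
  by move=> i; case: hS => _ hS2; apply: cone; [apply: hS2 | apply: hk].
have hcross := cross Dl hXr hZr Ts kap0 rho0 hT.
rewrite -eE1 in hcross.
have rk2 : rho * kap = 2 * c.
  by rewrite /rho /kap /c mulrCA -sqrtrM // mulrAC.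
have sqE := sqfD E T.
apply: le_trans (_ : _ <= sqf (E + T)) _; last by rewrite -frob2 -eF.
rewrite sqE.
rewrite -!frob2 in htu *.
set a := frob Dl in hdl htu hcross *; set t := frob T in hcross *.
have a0 : 0 <= a by apply: frob_ge0.
have t0 : 0 <= t by apply: frob_ge0.
move: hcross; rewrite ler_norml => /andP [hf _].
have hf' : - (4 * c * a * t) <= fdot E T.
  apply: le_trans hf; rewrite -/rho.
  have -> : 2 * rho * kap * a * t = 2 * (rho * kap) * a * t by ring.
  rewrite rk2; lra.
have h1 : coef * delta ^+ 2 <= coef * a ^+ 2.
  apply: ler_wpM2l; first exact: ltW.
  nra.
have h2 : coef * a ^+ 2 <= (2^-1 * sr ^+ 2 - 4 * c) * a ^+ 2.
  by rewrite ler_wpM2r ?sqr_ge0 // /coef; lra.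
have h3 : coef * t ^+ 2 <= (1 - 4 * c) * t ^+ 2.
  by rewrite ler_wpM2r ?sqr_ge0 // /coef; lra.
have h4 : 0 <= c * (a - t) ^+ 2 by apply: mulr_ge0; rewrite ?sqr_ge0.
have e4 : c * (a - t) ^+ 2 = c * a ^+ 2 - 2 * (c * a * t) + c * t ^+ 2 by ring.
rewrite e4 in h4.
have e5 : (2^-1 * sr ^+ 2 - 4 * c) * a ^+ 2 = 2^-1 * (sr ^+ 2 * a ^+ 2) - 4 * (c * a ^+ 2) by ring.
have e6 : (1 - 4 * c) * t ^+ 2 = t ^+ 2 - 4 * (c * t ^+ 2) by ring.
have e7 : 4 * c * a * t = 4 * (c * a * t) by ring.
have e8 : sr ^+ 2 * a ^+ 2 / 2 = 2^-1 * (sr ^+ 2 * a ^+ 2) by field.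
rewrite e5 in h2; rewrite e6 in h3; rewrite e7 in hf'; rewrite e8 in htu.
rewrite mulrDr.
lra.
Qed.
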